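(* For an integer $d\geqslant 0$ and a real $x>0$, let $K_d(x)$ be the largest integer $k$ such that $(k-d)k\leqslant dx$; equivalently $K_d(x)=\lfloor (d+\sqrt{d^2+4dx})/2\rfloor$ (so $K_0(x)=0$). Then for integers $d$ and reals $x$ with $0\leqslant d\leqslant x$ and $x\geqslant 1$, $$K_{d+1}(x)-K_d(x)=\bigl(\sqrt{d+1}-\sqrt{d}\,\bigr)\sqrt{x}+O(1),$$ with an absolute implied constant.
   Context: $\lfloor t\rfloor$ denotes the integer part of the real number $t$. *)

(* Defs.v *)
From mathcomp Require Import all_boot all_order all_algebra.
From mathcomp Require Import reals.
Set Implicit Arguments. Unset Strict Implicit. Unset Printing Implicit Defensive.
Import Order.TTheory GRing.Theory Num.Theory.
Local Open Scope ring_scope.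

Definition K (R : realType) (d : nat) (x : R) : int :=
  Num.floor ((d%:R + Num.sqrt (d%:R ^+ 2 + 4 * d%:R * x)) / 2).

(* Main.v *)
Require Import Defs.
From mathcomp Require Import all_boot all_order all_algebra.
From mathcomp Require Import reals ring lra.
Import Order.TTheory GRing.Theory Num.Theory.
Local Open Scope ring_scope.
Lemma key (R : realFieldType) (s t u P Q : R) :
  0 <= s -> 0 <= t -> 1 <= u -> s <= u -> t^+2 = s^+2 + 1 -> 0 <= P -> 0 <= Q ->
  P^+2 = s^+4 + 4*s^+2*u^+2 -> Q^+2 = t^+4 + 4*t^+2*u^+2 ->
  -1 <= Q - P - 2*u*(t-s) <= 1.
Proof.
move=> s0 t0 u1 su ht P0 Q0 hP hQ.
have u0 : 0 < u by lra.
have st : s < t by nra.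
have tu : t <= 2*u by nra.
have Qge : 2*t*u <= Q by nra.
have Pge : 2*s*u <= P by nra.
have QP : P <= Q by nra.
set a := Q - 2*t*u. set b := P - 2*s*u.
set A1 := Q + 2*t*u. set A0 := P + 2*s*u.
have ha : a * A1 = t^+4 by rewrite /a /A1; nra.
have hb : b * A0 = s^+4 by rewrite /b /A0; nra.
have b0 : 0 <= b by rewrite /b; lra.
have A1pos : 4*t*u <= A1 by rewrite /A1; lra.
have A10 : A0 <= A1 by rewrite /A0 /A1; nra.
have E : Q - P - 2*u*(t-s) = a - b by rewrite /a /b; ring.
rewrite E.
have EA : (a - b) * A1 = 2*s^+2 + 1 - b*(A1 - A0).
  have t4 : t^+4 = (s^+2+1)^+2 by rewrite -ht; ring.
  have : (a-b)*A1 = a*A1 - b*A0 - b*(A1-A0) by ring.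
  by rewrite ha hb t4 => ->; ring.
have A1p : 0 < A1 by nra.
apply/andP; split; last first.
  have : (a - b) * A1 <= A1 by rewrite EA; nra.
  by move=> h; nra.
have QPs : (Q - P) * (Q + P) = 2*s^+2 + 1 + 4*u^+2.
  have t4 : t^+4 = (s^+2+1)^+2 by rewrite -ht; ring.
  have : (Q-P)*(Q+P) = Q^+2 - P^+2 by ring.
  by rewrite hQ hP t4 ht => ->; ring.
have ts : (t - s) * (t + s) = 1.
  have -> : (t-s)*(t+s) = t^+2 - s^+2 by ring.
  by rewrite ht; ring.
have QPb : (Q - P) * (2*u*(t+s)) <= 2*s^+2 + 1 + 4*u^+2.
  rewrite -QPs; apply: ler_wpM2l; first lra. nra.
have D : (A1 - A0) * (2*u*(t+s)) <= 11 * u^+2.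
  have : (A1 - A0) * (2*u*(t+s)) = (Q-P)*(2*u*(t+s)) + 4*u^+2*((t-s)*(t+s)) by rewrite /A1 /A0; ring.
  rewrite ts => ->.
  have : s^+2 <= u^+2 by rewrite ler_sqr ?nnegrE //; lra.
  have : 1 <= u^+2 by nra.
  lra.
have A0A1 : 16*s*t*u^+2 <= A0*A1.
  have h0 : 4*s*u <= A0 by rewrite /A0; lra.
  have -> : 16*s*t*u^+2 = (4*s*u)*(4*t*u) by ring.
  apply: ler_pM => //; nra.
have key : s^+4 * (A1 - A0) <= A0 * A1.
  have h1 : s^+4 * ((A1 - A0) * (2*u*(t+s))) <= s^+4 * (11*u^+2).
    by apply: ler_wpM2l => //; rewrite exprn_ge0.
  have h2 : s^+4 * (11*u^+2) <= (16*s*t*u^+2) * (2*u*(t+s)).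
    have s2 : s^+2 <= t*u by nra.
    have s3 : s^+3 <= t*t*u.
      have -> : s^+3 = s * s^+2 by ring.
      have -> : t*t*u = t * (t*u) by ring.
      apply: ler_pM; rewrite ?exprn_ge0 //; nra.
    have e1 : s^+4 * (11*u^+2) = 11 * u^+2 * s * s^+3 by ring.
    have e2 : 11 * u^+2 * s * s^+3 <= 11 * u^+2 * s * (t*t*u).
      apply: ler_wpM2l => //; nra.
    rewrite e1; apply: le_trans e2 _.
    have : 0 <= u^+3 * s * t * (21 * t + 32 * s).
      apply: mulr_ge0; last lra. apply: mulr_ge0 => //. apply: mulr_ge0 => //. apply: exprn_ge0; lra.
    have E2 : 16 * s * t * u ^+ 2 * (2 * u * (t + s)) - 11 * u ^+ 2 * s * (t * t * u) = u^+3 * s * t * (21 * t + 32 * s) by ring.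
    rewrite -E2 subr_ge0 //.
  have h3 : (16*s*t*u^+2) * (2*u*(t+s)) <= (A0*A1) * (2*u*(t+s)).
    apply: ler_wpM2r => //; nra.
  have hp : 0 < 2*u*(t+s) by nra.
  have : (s^+4 * (A1 - A0)) * (2*u*(t+s)) <= (A0*A1) * (2*u*(t+s)) by rewrite -mulrA; lra.
  by rewrite ler_pM2r.
have : b*(A1 - A0) <= A1.
  have [sz|sp] := eqVneq s 0.
    have P2 : P^+2 = 0 by rewrite hP sz; ring.
    have Pz : P = 0 by by move/eqP: P2; rewrite expf_eq0 => /andP[_ /eqP].
    have -> : b = 0 by rewrite /b Pz sz; ring.
    by rewrite mul0r; lra.
  have sp' : 0 < s by rewrite lt_def sp s0.
  have A0p : 0 < A0 by rewrite /A0; nra.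
  have : b * (A1 - A0) * A0 <= A1 * A0.
    have -> : b * (A1 - A0) * A0 = s^+4 * (A1 - A0) by rewrite -hb; ring.
    by rewrite (mulrC A1).
  by rewrite ler_pM2r.
move=> h; nra.
Qed.

Theorem proposition2 (R : realType) :
  exists C : R, forall (d : nat) (x : R),
    d%:R <= x -> 1 <= x ->
    `| (K d.+1 x - K d x)%:~R
       - (Num.sqrt (d.+1)%:R - Num.sqrt d%:R) * Num.sqrt x | <= C.
Proof.
exists 3 => d x dx x1.
rewrite /K.
set s := Num.sqrt d%:R. set t := Num.sqrt d.+1%:R. set u := Num.sqrt x.
set P := Num.sqrt (d%:R ^+ 2 + 4 * d%:R * x).
set Q := Num.sqrt (d.+1%:R ^+ 2 + 4 * d.+1%:R * x).
have d0 : 0 <= d%:R :> R by apply: ler0n.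
have x0 : 0 <= x by lra.
have hs : s^+2 = d%:R by rewrite sqr_sqrtr.
have ht : t^+2 = s^+2 + 1 by rewrite sqr_sqrtr // -addn1 natrD hs.
have hu : u^+2 = x by rewrite sqr_sqrtr.
have hP : P^+2 = s^+4 + 4*s^+2*u^+2.
  rewrite sqr_sqrtr; last by apply: addr_ge0; [apply: exprn_ge0|nra].
  by rewrite hu -hs; ring.
have hQ : Q^+2 = t^+4 + 4*t^+2*u^+2.
  rewrite sqr_sqrtr; last by apply: addr_ge0; [apply: exprn_ge0; apply: ler0n|apply: mulr_ge0 => //; apply: mulr_ge0 => //; apply: ler0n].
  have -> : t^+4 = (t^+2)^+2 by ring.
  by rewrite hu ht hs -addn1 natrD; ring.
have s0 : 0 <= s by apply: sqrtr_ge0.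
have t0 : 0 <= t by apply: sqrtr_ge0.
have u1 : 1 <= u by rewrite /u -sqrtr1 ler_sqrt //; lra.
have su : s <= u by rewrite /s /u ler_sqrt //; lra.
have P0 : 0 <= P by apply: sqrtr_ge0.
have Q0 : 0 <= Q by apply: sqrtr_ge0.
have /andP[k1 k2] := @key R s t u P Q s0 t0 u1 su ht P0 Q0 hP hQ.
set y0 := (d%:R + P) / 2. set y1 := (d.+1%:R + Q) / 2.
have ey0 : y0 = (s^+2 + P) / 2 by rewrite hs.
have ey1 : y1 = (s^+2 + 1 + Q) / 2 by rewrite /y1 -addn1 natrD hs.
set f0 := Num.floor y0. set f1 := Num.floor y1.
have a0 : (f0%:~R : R) <= y0 := floor_le y0.
have b0 : y0 < ((f0 + 1)%:~R : R) := floorD1_gt y0.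
have a1 : (f1%:~R : R) <= y1 := floor_le y1.
have b1 : y1 < ((f1 + 1)%:~R : R) := floorD1_gt y1.
rewrite intrD mulr1z in b0. rewrite intrD mulr1z in b1.
rewrite ey0 in a0 b0. rewrite ey1 in a1 b1.
have e2 : 2 * u * (t - s) = 2 * ((t - s) * u) by ring.
rewrite e2 in k1 k2.
suff main : -3 <= (f1%:~R : R) - f0%:~R - (t - s) * u <= 3 by rewrite intrB ler_norml.
move: k1 k2 a0 b0 a1 b1.
generalize ((t - s) * u) (f0%:~R : R) (f1%:~R : R) (s^+2) => m z0 z1 S.
move=> k1 k2 a0 b0 a1 b1.
apply/andP; split; lra.
Qed.
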